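(* Consider the delay differential system \[ \begin{aligned} \dot T(t)&= s-dT(t)+aT(t)\Big(1-\frac{T(t)+I(t)}{T_{\max}}\Big)-\frac{bT(t)V(t)}{1+\alpha V(t)},\\ \dot I(t)&= \frac{bT(t-\tau)V(t-\tau)}{1+\alpha V(t-\tau)}+aI(t)\Big(1-\frac{T(t)+I(t)}{T_{\max}}\Big)-\mu I(t),\\ \dot V(t)&= pI(t)-cV(t), \end{aligned} \] with positive constants $s,d,a,T_{\max},b,\alpha,\mu,p,c$ and $\tau\ge0$, and nonnegative continuous initial data on $[-\tau,0]$. Let \[ T_0=\frac{T_{\max}}{2a}\Big(a-d+\sqrt{(a-d)^2+\tfrac{4as}{T_{\max}}}\Big),\qquad R_0=\frac{1}{\mu}\Big[\frac{bpT_0}{c}+a\Big(1-\frac{T_0}{T_{\max}}\Big)\Big]. \] If $R_0\le1$, then the infection-free equilibrium $E_1=(T_0,0,0)$ is globally asymptotically stable.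
   Context: $E_1=(T_0,0,0)$ is a constant solution of the system. *)

(* Defs.v *)
From Stdlib Require Import Reals.
From Coquelicot Require Import Coquelicot.
Open Scope R_scope.

Definition T0 (s d a Tmax : R) : R :=
  Tmax / (2 * a) * (a - d + sqrt ((a - d) ^ 2 + 4 * a * s / Tmax)).

Definition R0_number (s d a Tmax b mu p c : R) : R :=
  / mu * (b * p * T0 s d a Tmax / c + a * (1 - T0 s d a Tmax / Tmax)).

(* (T, I, V) : R -> R (only values on [-tau, +oo) matter) is a solution of the
   delay system with nonnegative continuous initial data on [-tau, 0]:
   - T, I, V are continuous on [-tau, +oo);
   - they are nonnegative on [-tau, 0] (initial history);
   - for every t > 0 they are differentiable and satisfy the equations. *)
Definition is_solution (s d a Tmax b alpha mu p c tau : R)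
    (T I V : R -> R) : Prop :=
  continuous_on (fun t => -tau <= t) T /\
  continuous_on (fun t => -tau <= t) I /\
  continuous_on (fun t => -tau <= t) V /\
  (forall t, -tau <= t <= 0 -> 0 <= T t /\ 0 <= I t /\ 0 <= V t) /\
  (forall t, 0 < t ->
     is_derive T t
       (s - d * T t + a * T t * (1 - (T t + I t) / Tmax)
        - b * T t * V t / (1 + alpha * V t)) /\
     is_derive I t
       (b * T (t - tau) * V (t - tau) / (1 + alpha * V (t - tau))
        + a * I t * (1 - (T t + I t) / Tmax) - mu * I t) /\
     is_derive V t (p * I t - c * V t)).

Definition init_close (tau delta x0 y0 z0 : R) (T I V : R -> R) : Prop :=
  forall t, -tau <= t <= 0 ->
    Rabs (T t - x0) < delta /\ Rabs (I t - y0) < delta /\ Rabs (V t - z0) < delta.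

Definition globally_asymptotically_stable (s d a Tmax b alpha mu p c tau : R)
    (x0 y0 z0 : R) : Prop :=
  (forall eps, 0 < eps -> exists delta, 0 < delta /\
     forall T I V, is_solution s d a Tmax b alpha mu p c tau T I V ->
       init_close tau delta x0 y0 z0 T I V ->
       forall t, 0 <= t ->
         Rabs (T t - x0) < eps /\ Rabs (I t - y0) < eps /\ Rabs (V t - z0) < eps) /\
  (forall T I V, is_solution s d a Tmax b alpha mu p c tau T I V ->
     is_lim T p_infty x0 /\ is_lim I p_infty y0 /\ is_lim V p_infty z0).

(* Main.v *)
From Stdlib Require Import Reals Lra Psatz.
From Coquelicot Require Import Coquelicot.
Require Import Defs.
Open Scope R_scope.

Lemma cont_ed (f : R -> R) x : continuous f x ->
  forall eps, 0 < eps -> exists del, 0 < del /\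
    forall y, Rabs (y - x) < del -> Rabs (f y - f x) < eps.
Proof.
  intros H eps He.
  apply filterlim_locally with (eps := mkposreal eps He) in H.
  destruct H as [del Hd].
  exists del; split; [apply cond_pos|].
  intros y Hy. apply (Hd y). exact Hy.
Qed.

Lemma cont_pos_nbhd (f : R -> R) x : continuous f x -> 0 < f x ->
  exists del, 0 < del /\ forall y, Rabs (y - x) < del -> 0 < f y.
Proof.
  intros H Hp. destruct (cont_ed f x H (f x / 2)) as [del [Hd Hy]]. lra.
  exists del; split; auto. intros y Hy'. specialize (Hy y Hy').
  apply Rabs_def2 in Hy. lra.
Qed.

Lemma sup_first (h : R -> R) z t1 : z < t1 ->
  (forall t, z <= t <= t1 -> continuous h t) -> 0 < h z -> h t1 <= 0 ->
  exists w, z < w <= t1 /\ h w = 0 /\ forall u, z <= u < w -> 0 < h u.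
Proof.
  intros Hz Hc Hhz Ht1.
  set (E := fun x => z <= x <= t1 /\ forall u, z <= u <= x -> 0 < h u).
  assert (HB : bound E). { exists t1. intros x [Hx _]. lra. }
  assert (HE : exists x, E x). { exists z. split. lra. intros u Hu. replace u with z by lra. auto. }
  destruct (completeness E HB HE) as [w [Hub Hlub]].
  assert (Hzw : z <= w) by (apply Hub; split; [lra| intros u Hu; replace u with z by lra; auto]).
  assert (Hwt : w <= t1) by (apply Hlub; intros x [Hx _]; lra).
  assert (Hbelow : forall u, z <= u < w -> 0 < h u).
  { intros u Hu. destruct (Rle_or_lt u z) as [Huz|Huz].
    replace u with z by lra; auto.
    assert (~ (forall x, E x -> x <= u)) as Hn.
    { intro Hc'. specialize (Hlub u Hc'). lra. }
    apply Classical_Pred_Type.not_all_ex_not in Hn. destruct Hn as [x Hx].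
    apply Classical_Prop.imply_to_and in Hx. destruct Hx as [[Hx1 Hx2] Hx3].
    apply Hx2. lra. }
  assert (Hc_w : continuous h w) by (apply Hc; lra).
  destruct (Rtotal_order (h w) 0) as [Hneg|[Heq|Hpos]].
  -
    exfalso.
    destruct (cont_ed h w Hc_w (- h w / 2)) as [del [Hd Hy]]. lra.
    destruct (Rle_or_lt w z) as [Hwz|Hwz].
    { replace w with z in Hneg by lra. lra. }
    set (u := Rmax z (w - del/2)).
    assert (Hu1 : z <= u) by apply Rmax_l.
    assert (Hu2 : u < w) by (unfold u; apply Rmax_lub_lt; lra).
    assert (Hu3 : Rabs (u - w) < del).
    { unfold u. unfold Rmax. destruct Rle_dec; rewrite Rabs_left; lra. }
    specialize (Hy u Hu3). specialize (Hbelow u (conj Hu1 Hu2)).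
    apply Rabs_def2 in Hy. lra.
  - exists w. split; [|split; auto].
    split; auto. destruct (Rle_or_lt w z); [|lra]. replace w with z in Heq by lra. lra.
  - exfalso.
    destruct (Rle_or_lt t1 w) as [Htw|Htw].
    { replace w with t1 in Hpos by lra. lra. }
    destruct (cont_pos_nbhd h w Hc_w Hpos) as [del [Hd Hy]].
    set (x := Rmin t1 (w + del/2)).
    assert (Ex : E x).
    { split. unfold x. split. apply Rmin_glb; lra. apply Rmin_l.
      intros u Hu. destruct (Rlt_or_le u w) as [Huw|Huw].
      apply Hbelow; lra.
      apply Hy. assert (u <= w + del/2) by (generalize (Rmin_r t1 (w + del/2)); unfold x in Hu; lra).
      rewrite Rabs_right; lra. }
    specialize (Hub x Ex). unfold x in Hub.
    unfold Rmin in Hub; destruct Rle_dec in Hub; lra.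
Qed.

Lemma deriv_left (f : R -> R) w df : is_derive f w df -> 0 < df ->
  forall del, 0 < del -> exists u, w - del < u < w /\ f u < f w.
Proof.
  intros H Hd del Hdel.
  apply is_derive_Reals in H.
  destruct (H (df/2)) as [e He]. lra.
  set (h := - (Rmin del e) / 2).
  assert (Hm : 0 < Rmin del e) by (apply Rmin_glb_lt; [lra| apply cond_pos]).
  assert (Hh : h <> 0) by (unfold h; lra).
  assert (Hha : Rabs h < e).
  { unfold h. rewrite Rabs_left by lra. generalize (Rmin_r del e); lra. }
  specialize (He h Hh Hha).
  exists (w + h). split.
  - unfold h. generalize (Rmin_l del e). lra.
  - apply Rabs_def2 in He. destruct He as [He1 He2].
    assert (Hq : df / 2 < (f (w + h) - f w) / h) by lra.
    assert (hneg : h < 0) by (unfold h; lra).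
    apply Rmult_lt_compat_r with (r := - h) in Hq; [|lra].
    replace ((f (w + h) - f w) / h * - h) with (- (f (w + h) - f w)) in Hq by (field; lra).
    nra.
Qed.

Lemma mvt (f df : R -> R) x y : x < y ->
  (forall t, x <= t <= y -> is_derive f t (df t)) ->
  exists c, x <= c <= y /\ f y - f x = df c * (y - x).
Proof.
  intros Hxy Hd.
  destruct (MVT_gen f x y df) as [c [Hc Heq]].
  - intros t Ht. rewrite Rmin_left, Rmax_right in Ht by lra. apply Hd; lra.
  - intros t Ht. rewrite Rmin_left, Rmax_right in Ht by lra.
    apply continuity_pt_filterlim. apply (ex_derive_continuous f).
    exists (df t). apply Hd; lra.
  - exists c. rewrite Rmin_left, Rmax_right in Hc by lra. auto.
Qed.

Lemma mvt_cont (f df : R -> R) x y : x < y ->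
  (forall t, x < t < y -> is_derive f t (df t)) ->
  (forall t, x <= t <= y -> continuous f t) ->
  exists c, x <= c <= y /\ f y - f x = df c * (y - x).
Proof.
  intros Hxy Hd Hc.
  destruct (MVT_gen f x y df) as [c [Hc' Heq]].
  - intros t Ht. rewrite Rmin_left, Rmax_right in Ht by lra. apply Hd; lra.
  - intros t Ht. rewrite Rmin_left, Rmax_right in Ht by lra.
    apply continuity_pt_filterlim. apply Hc; lra.
  - exists c. rewrite Rmin_left, Rmax_right in Hc' by lra. auto.
Qed.
Lemma T0_facts s d a Tmax : 0 < s -> 0 < a -> 0 < Tmax ->
  0 < T0 s d a Tmax /\
  s - d * T0 s d a Tmax + a * T0 s d a Tmax * (1 - T0 s d a Tmax / Tmax) = 0.
Proof.
  intros hs ha hT. unfold T0.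
  set (D := (a - d) ^ 2 + 4 * a * s / Tmax).
  assert (Hd: D * Tmax = (a-d)^2*Tmax + 4*a*s) by (unfold D; field; lra).
  assert (HD : (a - d)^2 < D).
  { unfold D. assert (0 < 4 * a * s / Tmax) by (apply Rdiv_lt_0_compat; nra). lra. }
  clearbody D.
  assert (HD0 : 0 <= D) by (generalize (pow2_ge_0 (a-d)); lra).
  assert (HS : sqrt D * sqrt D = D) by (apply sqrt_sqrt; lra).
  assert (HS0 : 0 <= sqrt D) by apply sqrt_pos.
  assert (Hgt : a - d < sqrt D).
  { destruct (Rle_or_lt (a - d) 0). nra. nra. }
  assert (Hgt2 : d - a < sqrt D).
  { destruct (Rle_or_lt (d - a) 0). nra. nra. }
  split.
  - assert (0 < Tmax / (2 * a)) by (apply Rdiv_lt_0_compat; lra).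
    apply Rmult_lt_0_compat. assumption. lra.
  -     field_simplify_eq. 2: lra.
    nra.
Qed.
Lemma B_lb b alpha X Y q M : 0 < b -> 0 < alpha -> 0 <= q -> alpha * q <= 1/2 -> q <= M ->
  -q <= X <= M -> -q <= Y <= M -> -(2*b*M*q) <= b*X*Y/(1+alpha*Y).
Proof.
  intros hb ha hq haq hqM [HX1 HX2] [HY1 HY2].
  assert (HD : 1/2 <= 1 + alpha * Y) by nra.
  assert (HXY : - (M * q) <= X * Y).
  { destruct (Rle_or_lt 0 X), (Rle_or_lt 0 Y); nra. }
  assert (0 <= b*M*q) by (apply Rmult_le_pos; [apply Rmult_le_pos|]; lra).
  assert (b*(X*Y) >= -(b*(M*q))) by nra.
  destruct (Rle_or_lt 0 (X*Y)) as [Hp|Hp].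
  - assert (0 <= b*X*Y/(1+alpha*Y)).
    { unfold Rdiv. apply Rmult_le_pos. rewrite Rmult_assoc. apply Rmult_le_pos; lra.
      left. apply Rinv_0_lt_compat. lra. }
    nra.
  - assert (E : b*X*Y/(1+alpha*Y) - 2*b*X*Y = b*(X*Y)*(-1 - 2*alpha*Y)/(1+alpha*Y)) by (field; lra).
    assert (0 <= b*(X*Y)*(-1 - 2*alpha*Y)/(1+alpha*Y)).
    { unfold Rdiv. apply Rmult_le_pos. 2: (left; apply Rinv_0_lt_compat; lra).
      assert (b*(X*Y) <= 0) by nra. nra. }
    nra.
Qed.
Lemma Rmax_lip u x c : Rabs (Rmax u c - Rmax x c) <= Rabs (u - x).
Proof.
  unfold Rmax; destruct (Rle_dec u c), (Rle_dec x c);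
  unfold Rabs; repeat destruct Rcase_abs; lra.
Qed.

Lemma ext_cont (f : R -> R) (c c' : R) :
  continuous_on (fun t => c <= t) f -> c <= c' ->
  forall x, continuous (fun u => f (Rmax u c')) x.
Proof.
  intros Hf Hc x.
  apply filterlim_locally. intros eps.
  assert (Hd : c <= Rmax x c') by (generalize (Rmax_r x c'); lra).
  specialize (Hf _ Hd).
  apply filterlim_locally with (eps := eps) in Hf.
  destruct Hf as [del Hdel].
  exists del. intros y Hy.
  apply Hdel.
  - apply Rle_lt_trans with (Rabs (y - x)). apply Rmax_lip. exact Hy.
  - generalize (Rmax_r y c'); lra.
Qed.

Lemma exp_le_exp x y : x <= y -> exp x <= exp y.
Proof. intros [H|H]. left; apply exp_increasing; auto. subst; lra. Qed.
Lemma Rmin_lip a b a' b' e : Rabs (a - a') < e -> Rabs (b - b') < e -> Rabs (Rmin a b - Rmin a' b') < e.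
Proof.
  intros H1 H2. apply Rabs_def2 in H1. apply Rabs_def2 in H2.
  apply Rabs_def1; unfold Rmin; repeat destruct Rle_dec; lra.
Qed.
Lemma cont_min (f g : R -> R) x : continuous f x -> continuous g x -> continuous (fun t => Rmin (f t) (g t)) x.
Proof.
  intros Hf Hg. apply filterlim_locally. intros eps.
  apply filterlim_locally with (eps := eps) in Hf.
  apply filterlim_locally with (eps := eps) in Hg.
  generalize (filter_and _ _ Hf Hg). apply filter_imp.
  intros y [H1 H2]. apply Rmin_lip. apply H1. apply H2.
Qed.
Lemma cont_plus_exp (f : R -> R) x eps L z : continuous f x -> continuous (fun t => f t + eps * exp (L*(t-z))) x.
Proof.
  intros Hf. apply (continuous_plus f (fun t => eps * exp (L*(t-z)))); auto.
  apply (ex_derive_continuous (fun t => eps * exp (L*(t-z)))). auto_derive. auto.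
Qed.
Lemma log_lb a Tmax q M W : 0 < a -> 0 < Tmax -> 0 <= q -> q <= 1 -> 1 <= M -> -q <= W ->
  -(a*q) - 2*a*M/Tmax*q <= a * (-q) * (1 - (-q + W)/Tmax).
Proof.
  intros ha hT hq hq1 hM hW.
  assert (E: a * (-q) * (1 - (-q + W)/Tmax) = -(a*q) + (a*q/Tmax) * (W - q)) by (field; lra).
  rewrite E.
  assert (0 <= a*q/Tmax) by (apply Rle_mult_inv_pos; nra).
  assert ((a*q/Tmax) * (-2*M) <= (a*q/Tmax) * (W - q)) by (apply Rmult_le_compat_l; lra).
  assert (E2 : 2*a*M/Tmax*q = (a*q/Tmax) * (2*M)) by (field; lra).
  lra.
Qed.
Lemma log_lb' a Tmax q M W : 0 < a -> 0 < Tmax -> 0 <= q -> q <= 1 -> 1 <= M -> -q <= W ->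
  -(a*q) - 2*a*M/Tmax*q <= a * (-q) * (1 - (W + -q)/Tmax).
Proof. intros. rewrite Rplus_comm. apply log_lb; auto. Qed.

Lemma Rmin3_le x y z : Rmin (Rmin x y) z <= x /\ Rmin (Rmin x y) z <= y /\ Rmin (Rmin x y) z <= z.
Proof. unfold Rmin; repeat destruct Rle_dec; lra. Qed.

Lemma Rmin3_zero x y z : Rmin (Rmin x y) z = 0 -> x = 0 \/ y = 0 \/ z = 0.
Proof. unfold Rmin; repeat destruct Rle_dec; lra. Qed.
Lemma lyap_alg s d a Tmax b alpha mu p c T0 Tt It Vt X Y :
  0 < s -> 0 < a -> 0 < Tmax -> 0 < b -> 0 < alpha -> 0 < mu -> 0 < p -> 0 < c -> 0 < T0 ->
  0 < Tt -> 0 <= It -> 0 <= Vt -> 0 <= Y ->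
  s - d * T0 + a * T0 * (1 - T0 / Tmax) = 0 ->
  b * p * T0 / c + a * (1 - T0 / Tmax) <= mu ->
  let dTt := s - d * Tt + a * Tt * (1 - (Tt + It) / Tmax) - b * Tt * Vt / (1 + alpha * Vt) in
  let dIt := b * X * Y / (1 + alpha * Y) + a * It * (1 - (Tt + It) / Tmax) - mu * It in
  let dVt := p * It - c * Vt in
  dTt - T0 * (dTt / Tt) + dIt + b * T0 / c * dVt
    + (b * Tt * Vt / (1 + alpha * Vt) - b * X * Y / (1 + alpha * Y))
  <= - (s / (Tt * T0)) * (Tt - T0)^2 - a / Tmax * (Tt + It - T0)^2
     - b * T0 * alpha * Vt^2 / (1 + alpha * Vt).
Proof.
  intros hs ha hT hb hal hmu hp hc hT0 hTt hIt hVt hY Hf HR dTt dIt dVt.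
  assert (Hd : d = (s + a * T0 * (1 - T0 / Tmax)) / T0) by (apply (Rmult_eq_reg_r T0); [|lra]; unfold Rdiv; rewrite Rmult_assoc, Rinv_l by lra; lra).
  assert (Hv : 0 < 1 + alpha * Vt) by nra.
  assert (0 < 1 + alpha * Y) by nra.
  assert (E : dTt - T0 * (dTt / Tt) + dIt + b * T0 / c * dVt
    + (b * Tt * Vt / (1 + alpha * Vt) - b * X * Y / (1 + alpha * Y))
    = - (s / (Tt * T0)) * (Tt - T0)^2 - a / Tmax * (Tt + It - T0)^2
     - b * T0 * alpha * Vt^2 / (1 + alpha * Vt) + It * (b * p * T0 / c + a * (1 - T0/Tmax) - mu)).
  { unfold dTt, dIt, dVt. rewrite Hd. field. repeat split; lra. }
  rewrite E.
  assert (It * (b * p * T0 / c + a * (1 - T0/Tmax) - mu) <= 0) by nra.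
  lra.
Qed.

Lemma ln_le_sub1 y : 0 < y -> ln y <= y - 1.
Proof. intros H. generalize (exp_ineq1_le (ln y)). rewrite exp_ln by auto. lra. Qed.

Lemma g_nonneg T0 x : 0 < T0 -> 0 < x -> 0 <= x - T0 - T0 * ln (x / T0).
Proof.
  intros H0 Hx. assert (H := ln_le_sub1 (x / T0) ltac:(apply Rdiv_lt_0_compat; lra)).
  assert (T0 * ln (x / T0) <= T0 * (x / T0 - 1)) by (apply Rmult_le_compat_l; lra).
  replace (T0 * (x / T0 - 1)) with (x - T0) in H1 by (field; lra). lra.
Qed.
Lemma barbalat (U dU h dh : R -> R) t2 cc K :
  0 < cc -> 0 < K ->
  (forall t, t2 < t -> is_derive U t (dU t)) ->
  (forall t, t2 < t -> is_derive h t (dh t)) ->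
  (forall t, t2 < t -> dU t <= - cc * (h t)^2) ->
  (forall t, t2 < t -> Rabs (dh t) <= K) ->
  (forall t, t2 < t -> 0 <= U t) ->
  forall eps, 0 < eps -> exists N, forall t, N < t -> Rabs (h t) < eps.
Proof.
  intros Hcc HK DU Dh HdU Hdh HU eps Heps.
  assert (Hmono : forall x y, t2 < x -> x <= y -> U y <= U x).
  { intros x y Hx [Hxy|Hxy]; [|subst; lra].
    destruct (mvt U dU x y Hxy) as [c0 [Hc Heq]]. intros t Ht; apply DU; lra.
    assert (dU c0 <= 0) by (generalize (HdU c0 ltac:(lra)) (pow2_ge_0 (h c0)); nra).
    nra. }
  set (del := eps / (2 * K)).
  assert (Hdel : 0 < del) by (unfold del; apply Rdiv_lt_0_compat; lra).
  set (gam := cc * (eps/2)^2 * del).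
  assert (Hgam : 0 < gam) by (unfold gam; apply Rmult_lt_0_compat; [apply Rmult_lt_0_compat|]; nra).
  assert (Hdec : forall x, t2 < x -> eps <= Rabs (h x) -> U (x + del) <= U x - gam).
  { intros x Hx Hhx.
    assert (Hh2 : forall u, x <= u <= x + del -> (eps/2)^2 <= (h u)^2).
    { intros u Hu. destruct (Rle_lt_or_eq_dec x u ltac:(lra)) as [Hxu|Hxu].
      - destruct (mvt h dh x u Hxu) as [c0 [Hc Heq]]. intros t Ht; apply Dh; lra.
        assert (Habs : Rabs (h u - h x) <= eps / 2).
        { rewrite Heq, Rabs_mult, (Rabs_right (u - x)) by lra.
          apply Rle_trans with (K * del).
          apply Rmult_le_compat; try lra. apply Rabs_pos. apply Hdh; lra.
          unfold del. right. field. lra. }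
        assert (eps / 2 <= Rabs (h u)).
        { generalize (Rabs_triang_inv (h x) (h u)). rewrite <- Rabs_Ropp in Habs.
          replace (- (h u - h x)) with (h x - h u) in Habs by ring. lra. }
        rewrite <- (Rsqr_pow2 (h u)), Rsqr_abs, Rsqr_pow2.
        apply pow_incr. lra.
      - subst u. rewrite <- (Rsqr_pow2 (h x)), Rsqr_abs, Rsqr_pow2. apply pow_incr. lra. }
    destruct (mvt U dU x (x + del) ltac:(lra)) as [c0 [Hc Heq]]. intros t Ht; apply DU; lra.
    assert (dU c0 <= - cc * (eps/2)^2).
    { apply Rle_trans with (- cc * (h c0)^2). apply HdU; lra.
      specialize (Hh2 c0 Hc). nra. }
    replace (x + del - x) with del in Heq by ring.
    unfold gam. nra. }
  apply Classical_Prop.NNPP. intros Hn.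
  assert (Hbad : forall N, exists t, N < t /\ eps <= Rabs (h t)).
  { intros N. apply Classical_Prop.NNPP. intros Hn2. apply Hn. exists N. intros t Ht.
    destruct (Rlt_or_le (Rabs (h t)) eps); auto. exfalso. apply Hn2. exists t; auto. }
  assert (Hind : forall n : nat, exists x, t2 + 1 <= x /\ U x <= U (t2 + 1) - INR n * gam).
  { induction n as [|n IH].
    - exists (t2 + 1). simpl. lra.
    - destruct IH as [x [Hx Hux]].
      destruct (Hbad x) as [t [Ht Hht]].
      exists (t + del). split. lra.
      assert (U (t + del) <= U t - gam) by (apply Hdec; auto; lra).
      assert (U t <= U x) by (apply Hmono; lra).
      rewrite S_INR. lra. }
  destruct (archimed (U (t2 + 1) / gam)) as [Ha _].
  destruct (INR_unbounded (U (t2 + 1) / gam)) as [n Hn'].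
  destruct (Hind n) as [x [Hx Hux]].
  assert (0 <= U x) by (apply HU; lra).
  assert (U (t2 + 1) < INR n * gam).
  { apply (Rmult_lt_compat_r gam) in Hn'; [|lra].
    unfold Rdiv in Hn'. rewrite Rmult_assoc, Rinv_l, Rmult_1_r in Hn' by lra. lra. }
  lra.
Qed.

Lemma ln_half y : 0 < y -> ln y <= y / 2.
Proof.
  intros Hy. assert (H2 : ln 2 < 1).
  { rewrite <- ln_exp with 1. apply ln_increasing. lra.
    generalize (exp_ineq1 1 ltac:(lra)). lra. }
  assert (H := ln_le_sub1 (y / 2) ltac:(lra)).
  rewrite ln_div in H by lra. lra.
Qed.

Lemma g_lower T0 x : 0 < T0 -> 0 < x -> x / 2 - T0 <= x - T0 - T0 * ln (x / T0).
Proof.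
  intros H0 Hx. assert (H := ln_half (x / T0) ltac:(apply Rdiv_lt_0_compat; lra)).
  assert (T0 * ln (x / T0) <= T0 * (x / T0 / 2)) by (apply Rmult_le_compat_l; lra).
  replace (T0 * (x / T0 / 2)) with (x / 2) in H1 by (field; lra). lra.
Qed.

Lemma frac_bounds b alpha x z M : 0 < b -> 0 < alpha -> 0 <= x <= M -> 0 <= z <= M ->
  0 <= b * x * z / (1 + alpha * z) <= b * M * M.
Proof.
  intros hb ha Hx Hz. assert (Hd : 1 <= 1 + alpha * z) by nra.
  assert (0 <= b * x * z) by (apply Rmult_le_pos; [apply Rmult_le_pos|]; lra).
  split. apply Rdiv_le_0_compat; lra.
  apply Rle_trans with (b * x * z).
  - unfold Rdiv. rewrite <- (Rmult_1_r (b * x * z)) at 2. apply Rmult_le_compat_l; auto.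
    rewrite <- Rinv_1. apply Rinv_le_contravar; lra.
  - assert (x * z <= M * M) by (apply Rmult_le_compat; lra). nra.
Qed.

Lemma logi_bounds a Tmax x y M : 0 < a -> 0 < Tmax -> 0 <= x <= M -> 0 <= y <= M ->
  - (2*a*M*M/Tmax) <= a * x * (1 - (x + y) / Tmax) - a * x <= 0.
Proof.
  intros ha hT Hx Hy.
  replace (a * x * (1 - (x + y) / Tmax) - a * x) with (- (a * (x * (x + y)) / Tmax)) by (field; lra).
  assert (0 <= x * (x + y) <= M * (2*M)) by (split; [apply Rmult_le_pos|apply Rmult_le_compat]; lra).
  assert (0 <= a * (x * (x + y)) / Tmax) by (apply Rdiv_le_0_compat; nra).
  assert (a * (x * (x + y)) / Tmax <= 2*a*M*M/Tmax).
  { unfold Rdiv. apply Rmult_le_compat_r. left; apply Rinv_0_lt_compat; lra. nra. }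
  lra.
Qed.

Definition gfun T0 x := x - T0 - T0 * ln (x / T0).

Lemma ln_ge_1m y : 0 < y -> 1 - / y <= ln y.
Proof.
  intros Hy. assert (H := ln_le_sub1 (/ y) ltac:(apply Rinv_0_lt_compat; lra)).
  rewrite ln_Rinv in H by lra. lra.
Qed.



Lemma g_upper T0 x : 0 < T0 -> 0 < x -> gfun T0 x <= (x - T0)^2 / x.
Proof.
  intros H0 Hx. unfold gfun.
  assert (H := ln_ge_1m (x / T0) ltac:(apply Rdiv_lt_0_compat; lra)).
  assert (T0 * (1 - / (x / T0)) <= T0 * ln (x / T0)) by (apply Rmult_le_compat_l; lra).
  replace (T0 * (1 - / (x / T0))) with (T0 - T0 * T0 / x) in H1 by (field; lra).
  replace ((x - T0)^2 / x) with (x - 2 * T0 + T0 * T0 / x) by (field; lra). lra.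
Qed.

Lemma g_mono_r T0 x y : 0 < T0 -> T0 <= y -> y <= x -> gfun T0 y <= gfun T0 x.
Proof.
  intros H0 Hy Hxy. unfold gfun.
  assert (Hl : ln (x / T0) - ln (y / T0) = ln (x / y)) by (rewrite !ln_div by lra; ring).
  assert (H := ln_le_sub1 (x / y) ltac:(apply Rdiv_lt_0_compat; lra)).
  assert (T0 * ln (x / y) <= T0 * (x / y - 1)) by (apply Rmult_le_compat_l; lra).
  assert (T0 * (x / y - 1) <= x - y).
  { replace (T0 * (x / y - 1)) with ((x - y) * (T0 / y)) by (field; lra).
    assert (T0 / y <= 1) by (apply (Rmult_le_reg_r y); [lra|]; unfold Rdiv; rewrite Rmult_assoc, Rinv_l; lra).
    assert (0 <= T0 / y) by (apply Rdiv_le_0_compat; lra). nra. }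
  assert (T0 * ln (x/T0) - T0 * ln (y/T0) = T0 * ln (x/y)) by (rewrite <- Hl; ring).
  lra.
Qed.

Lemma g_mono_l T0 x y : 0 < T0 -> 0 < x -> x <= y -> y <= T0 -> gfun T0 y <= gfun T0 x.
Proof.
  intros H0 Hx Hxy Hy. unfold gfun.
  assert (Hl : ln (y / T0) - ln (x / T0) = ln (y / x)) by (rewrite !ln_div by lra; ring).
  assert (H := ln_ge_1m (y / x) ltac:(apply Rdiv_lt_0_compat; lra)).
  assert (T0 * (1 - / (y / x)) <= T0 * ln (y / x)) by (apply Rmult_le_compat_l; lra).
  assert (y - x <= T0 * (1 - / (y / x))).
  { replace (T0 * (1 - / (y / x))) with ((y - x) * (T0 / y)) by (field; lra).
    assert (1 <= T0 / y) by (apply (Rmult_le_reg_r y); [lra|]; unfold Rdiv; rewrite Rmult_assoc, Rinv_l; lra).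
    nra. }
  assert (T0 * ln (y/T0) - T0 * ln (x/T0) = T0 * ln (y/x)) by (rewrite <- Hl; ring).
  lra.
Qed.

Lemma g_pos T0 e : 0 < T0 -> 0 < e < T0 -> 0 < gfun T0 (T0 + e) /\ 0 < gfun T0 (T0 - e).
Proof.
  intros H0 He. unfold gfun. split.
  - replace ((T0 + e) / T0) with (1 + e / T0) by (field; lra).
    assert (H := exp_ineq1 (e / T0) ltac:(assert (0 < e / T0) by (apply Rdiv_lt_0_compat; lra); lra)).
    assert (Hl : ln (1 + e / T0) < e / T0).
    { rewrite <- (ln_exp (e / T0)) at 2. apply ln_increasing; auto. assert (0 < e / T0) by (apply Rdiv_lt_0_compat; lra). lra. }
    assert (T0 * ln (1 + e / T0) < T0 * (e / T0)) by (apply Rmult_lt_compat_l; lra).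
    replace (T0 * (e / T0)) with e in H1 by (field; lra). lra.
  - replace ((T0 - e) / T0) with (1 + - (e / T0)) by (field; lra).
    assert (Hq : e / T0 < 1) by (apply (Rmult_lt_reg_r T0); [lra|]; unfold Rdiv; rewrite Rmult_assoc, Rinv_l; lra).
    assert (Hq0 : 0 < e / T0) by (apply Rdiv_lt_0_compat; lra).
    assert (H := exp_ineq1 (- (e / T0)) ltac:(lra)).
    assert (Hl : ln (1 + - (e / T0)) < - (e / T0)).
    { rewrite <- (ln_exp (- (e / T0))) at 2. apply ln_increasing; lra. }
    assert (T0 * ln (1 + - (e / T0)) < T0 * (- (e / T0))) by (apply Rmult_lt_compat_l; lra).
    replace (T0 * (- (e / T0))) with (- e) in H1 by (field; lra). lra.
Qed.

Lemma g_small T0 e x : 0 < T0 -> 0 < e < T0 -> 0 < x ->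
  gfun T0 x < Rmin (gfun T0 (T0 + e)) (gfun T0 (T0 - e)) -> Rabs (x - T0) < e.
Proof.
  intros H0 He Hx Hg. apply Rabs_def1.
  - destruct (Rlt_or_le (x - T0) e); auto. exfalso.
    assert (gfun T0 (T0 + e) <= gfun T0 x) by (apply g_mono_r; lra).
    generalize (Rmin_l (gfun T0 (T0 + e)) (gfun T0 (T0 - e))). lra.
  - destruct (Rlt_or_le (-e) (x - T0)); auto. exfalso.
    assert (gfun T0 (T0 - e) <= gfun T0 x) by (apply g_mono_l; lra).
    generalize (Rmin_r (gfun T0 (T0 + e)) (gfun T0 (T0 - e))). lra.
Qed.


Section Model.
Variables s d a Tmax b alpha mu p c tau : R.
Hypotheses (hs : 0 < s) (hd : 0 < d) (ha : 0 < a) (hTm : 0 < Tmax) (hb : 0 < b)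
  (hal : 0 < alpha) (hmu : 0 < mu) (hp : 0 < p) (hc : 0 < c) (htau : 0 <= tau).
Variables T I V : R -> R.
Hypothesis Hsol : is_solution s d a Tmax b alpha mu p c tau T I V.

Definition Te u := T (Rmax u (-tau)).
Definition Ie u := I (Rmax u (-tau)).
Definition Ve u := V (Rmax u (-tau)).

Lemma e_eq (f : R -> R) t : -tau <= t -> f (Rmax t (-tau)) = f t.
Proof. intros H. rewrite Rmax_left; auto. Qed.

Lemma Te_cont x : continuous Te x.
Proof. destruct Hsol as [H _]. apply (ext_cont T (-tau) (-tau)); auto. lra. Qed.
Lemma Ie_cont x : continuous Ie x.
Proof. destruct Hsol as [_ [H _]]. apply (ext_cont I (-tau) (-tau)); auto. lra. Qed.
Lemma Ve_cont x : continuous Ve x.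
Proof. destruct Hsol as [_ [_ [H _]]]. apply (ext_cont V (-tau) (-tau)); auto. lra. Qed.

Definition dT t := s - d * T t + a * T t * (1 - (T t + I t) / Tmax)
        - b * T t * V t / (1 + alpha * V t).
Definition dI t := b * T (t - tau) * V (t - tau) / (1 + alpha * V (t - tau))
        + a * I t * (1 - (T t + I t) / Tmax) - mu * I t.
Definition dV t := p * I t - c * V t.

Lemma derivs t : 0 < t -> is_derive T t (dT t) /\ is_derive I t (dI t) /\ is_derive V t (dV t).
Proof. intros H. destruct Hsol as [_ [_ [_ [_ Hd]]]]. apply Hd; auto. Qed.

Lemma loc_eq (f : R -> R) w : -tau < w -> locally w (fun t => f t = f (Rmax t (-tau))).
Proof.
  intros H. exists (mkposreal (w + tau) ltac:(lra)). intros y Hy.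
  change (Rabs (y - w) < w + tau) in Hy. apply Rabs_def2 in Hy.
  rewrite Rmax_left; auto; lra.
Qed.

Lemma comp_deriv (f : R -> R) df w eps L z : is_derive f w df ->
  is_derive (fun t => f t + eps * exp (L*(t-z))) w (df + eps * (L * exp(L*(w-z)))).
Proof.
  intros H.
  apply (is_derive_plus f (fun t => eps * exp (L*(t-z)))); auto.
  auto_derive. auto. unfold Rminus; ring.
Qed.


Definition nonneg t := 0 <= T t /\ 0 <= I t /\ 0 <= V t.

Lemma local_bound (f : R -> R) z : continuous f z ->
  exists del, 0 < del /\ forall t, Rabs (t - z) < del -> Rabs (f t) <= 1 + Rabs (f z).
Proof.
  intros H. destruct (cont_ed f z H 1) as [del [Hd Hy]]. lra.
  exists del; split; auto. intros t Ht. specialize (Hy t Ht).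
  generalize (Rabs_triang_inv (f t) (f z)). lra.
Qed.

Lemma extend_eps z eta M eps :
  0 <= z -> 0 < eta -> 1 <= M ->
  (forall u, -tau <= u <= z -> nonneg u) ->
  (forall t, z <= t <= z + eta -> Rabs (T t) <= M /\ Rabs (I t) <= M /\ Rabs (V t) <= M) ->
  let L := 1 + p + a + 2*a*M/Tmax + 2*b*M in
  0 < eps -> eps * exp (L*eta) <= 1 -> alpha * (eps * exp (L*eta)) <= 1/2 ->
  forall t, z <= t <= z + eta ->
    -(eps*exp(L*(t-z))) <= T t /\ -(eps*exp(L*(t-z))) <= I t /\ -(eps*exp(L*(t-z))) <= V t.
Proof.
  intros Hz Heta HM Hnn Hbd L Heps Hq1 Hq2.
  set (E := fun t => exp (L*(t-z))).
  set (h := fun t => Rmin (Rmin (Te t + eps*E t) (Ie t + eps*E t)) (Ve t + eps*E t)).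
  assert (HL : 0 < L).
  { unfold L. assert (0 <= 2*a*M/Tmax) by (apply Rle_mult_inv_pos; nra). nra. }
  assert (HE : forall t, t <= z + eta -> 0 < E t /\ E t <= exp (L*eta)).
  { intros t Ht. split. apply exp_pos. unfold E. apply exp_le_exp. nra. }
  assert (HEmono : forall t1 t2, t1 <= t2 -> E t1 <= E t2).
  { intros t1 t2 H. unfold E. apply exp_le_exp. nra. }
  assert (Hcont : forall t, continuous h t).
  { intros t. unfold h, E.
    apply cont_min; [apply cont_min|]; apply cont_plus_exp;
      [apply Te_cont|apply Ie_cont|apply Ve_cont]. }
  assert (Hpos : forall t, z <= t <= z + eta -> 0 < h t).
  { intros t1 Ht1. destruct (Rle_or_lt (h t1) 0) as [Hneg|]; auto. exfalso.
    assert (Hz0 : 0 < h z).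
    { unfold h, Te, Ie, Ve. rewrite !e_eq by lra.
      destruct (Hnn z) as [H1 [H2 H3]]. lra.
      assert (0 < eps * E z) by (apply Rmult_lt_0_compat; auto; apply HE; lra).
      apply Rmin_glb_lt; [apply Rmin_glb_lt|]; lra. }
    assert (Hzt : z < t1).
    { destruct (Rle_or_lt t1 z); auto. replace t1 with z in Hneg by lra. lra. }
    destruct (sup_first h z t1 Hzt (fun t _ => Hcont t) Hz0 Hneg) as [w [Hw [Hhw Hbelow]]].
    assert (Hcomp : forall u, z <= u <= w ->
      -(eps*E u) <= T u /\ -(eps*E u) <= I u /\ -(eps*E u) <= V u).
    { intros u Hu. assert (Hh : 0 <= h u).
      { destruct (Rle_or_lt w u). replace u with w by lra. lra. left; apply Hbelow; lra. }
      unfold h, Te, Ie, Ve in Hh. rewrite !e_eq in Hh by lra.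
      destruct (Rmin3_le (T u + eps * E u) (I u + eps * E u) (V u + eps * E u)) as [A1 [A2 A3]].
      lra. }
    assert (Hw0 : 0 < w) by lra.
    set (q := eps * E w).
    assert (Hq : 0 < q /\ q <= 1 /\ alpha * q <= 1/2).
    { destruct (HE w) as [HE1 HE2]. lra.
      assert (eps * E w <= eps * exp (L*eta)) by (apply Rmult_le_compat_l; lra).
      unfold q. split. apply Rmult_lt_0_compat; lra. split. lra.
      assert (alpha * (eps*E w) <= alpha * (eps * exp (L*eta))) by (apply Rmult_le_compat_l; lra).
      lra. }
    destruct Hq as [Hq0 [Hq1' Hqa]].
    destruct (Hcomp w) as [CT [CI CV]]. lra. fold q in CT, CI, CV.
    destruct (Hbd w) as [BT [BI BV]]. lra.
    apply Rabs_le_between in BT. apply Rabs_le_between in BI. apply Rabs_le_between in BV.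
    destruct (derivs w Hw0) as [DT [DI DV]].
    assert (Hclose : forall (f : R -> R) df, is_derive f w df ->
      0 < df + eps * (L * E w) -> f w + eps * E w = 0 ->
      (forall u, z <= u < w -> h u <= f u + eps * E u) -> False).
    { intros f df Hf Hdf Hfw Hle.
      assert (Hd2 : is_derive (fun t => f (Rmax t (-tau)) + eps * exp (L*(t-z))) w
                     (df + eps * (L * exp(L*(w-z))))).
      { apply comp_deriv. apply (is_derive_ext_loc f). apply loc_eq. lra. auto. }
      destruct (deriv_left _ w _ Hd2 Hdf (w - z)) as [u [Hu1 Hu2]]. lra.
      rewrite e_eq in Hu2 by lra. rewrite e_eq in Hu2 by lra.
      specialize (Hle u ltac:(lra)). specialize (Hbelow u ltac:(lra)).
      unfold E in Hfw, Hle. lra. }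
    assert (Hh0 := Hhw). unfold h, Te, Ie, Ve in Hh0. rewrite !e_eq in Hh0 by lra.
    assert (HM0 : 0 <= 2*a*M/Tmax) by (apply Rle_mult_inv_pos; nra).
    assert (HbM : 0 <= 2*b*M*q) by (apply Rmult_le_pos; nra).
    assert (HLq : eps * (L * E w) = L * q) by (unfold q; ring).
    destruct (Rmin3_zero _ _ _ Hh0) as [Z|[Z|Z]]; fold q in Z.
    +
      apply (Hclose T (dT w)).
      * exact DT.
      * rewrite HLq. unfold dT. replace (T w) with (-q) by lra.
        assert (P1 := log_lb a Tmax q M (I w) ha hTm ltac:(lra) Hq1' HM CI).
        assert (P2 := B_lb b alpha q (V w) q M hb hal ltac:(lra) Hqa ltac:(lra) ltac:(lra) ltac:(lra)).
        assert (E3: b * - q * V w / (1 + alpha * V w) = - (b * q * V w / (1 + alpha * V w))) by (unfold Rdiv; ring).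
        assert (E4: L * q = q + p*q + a*q + 2*a*M/Tmax*q + 2*b*M*q) by (unfold L; ring).
        rewrite E3, E4. assert (0 <= d * q) by nra. assert (0 <= p * q) by nra. lra.
      * unfold q in Z; lra.
      * intros u Hu. unfold h, Te. rewrite e_eq by lra. apply Rmin3_le.
    + apply (Hclose I (dI w)).
      * exact DI.
      * rewrite HLq. unfold dI. replace (I w) with (-q) by lra.
        assert (P1 := log_lb' a Tmax q M (T w) ha hTm ltac:(lra) Hq1' HM CT).
        assert (Hdel : -(2*b*M*q) <= b * T (w-tau) * V (w-tau) / (1 + alpha * V (w-tau))).
        { destruct (Rle_or_lt (w - tau) z) as [Hwz|Hwz].
          - destruct (Hnn (w - tau)) as [N1 [N2 N3]]. lra.
            assert (0 <= b * T (w-tau) * V (w-tau) / (1 + alpha * V (w-tau))).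
            { unfold Rdiv. apply Rmult_le_pos. apply Rmult_le_pos. apply Rmult_le_pos. lra. lra. lra.
              left. apply Rinv_0_lt_compat. nra. }
            lra.
          - destruct (Hcomp (w - tau)) as [C1 [C2 C3]]. lra.
            assert (HEE : E (w - tau) <= E w) by (apply HEmono; lra).
            assert (eps * E (w - tau) <= q) by (unfold q; apply Rmult_le_compat_l; lra).
            destruct (Hbd (w - tau)) as [B1 [B2 B3]]. lra.
            apply Rabs_le_between in B1. apply Rabs_le_between in B3.
            apply B_lb; auto; lra. }
        assert (E4: L * q = q + p*q + a*q + 2*a*M/Tmax*q + 2*b*M*q) by (unfold L; ring).
        rewrite E4. assert (0 <= mu * q) by nra. assert (0 <= p * q) by nra. lra.
      * unfold q in Z; lra.
      * intros u Hu. unfold h, Ie. rewrite e_eq by lra. apply Rmin3_le.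
    + apply (Hclose V (dV w)).
      * exact DV.
      * rewrite HLq. unfold dV. replace (V w) with (-q) by lra.
        assert (E4: L * q = q + p*q + a*q + 2*a*M/Tmax*q + 2*b*M*q) by (unfold L; ring).
        rewrite E4. assert (p * (-q) <= p * I w) by (apply Rmult_le_compat_l; lra).
        assert (0 <= c * q) by nra. assert (0 <= a * q) by nra.
        assert (0 <= 2*a*M/Tmax*q) by nra. lra.
      * unfold q in Z; lra.
      * intros u Hu. unfold h, Ve. rewrite e_eq by lra. apply Rmin3_le. }
  intros t Ht. specialize (Hpos t Ht). unfold h, Te, Ie, Ve in Hpos. rewrite !e_eq in Hpos by lra.
  destruct (Rmin3_le (T t + eps * E t) (I t + eps * E t) (V t + eps * E t)) as [A1 [A2 A3]].
  unfold E in *. lra.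
Qed.

Lemma small_eps_nonneg x K k alpha' : 0 < K -> 0 < k -> k <= K -> 0 < alpha' ->
  (forall eps, 0 < eps -> eps * K <= 1 -> alpha' * (eps * K) <= 1/2 -> -(eps * k) <= x) -> 0 <= x.
Proof.
  intros HK Hk HkK Ha H. destruct (Rle_or_lt 0 x) as [|Hx]; auto. exfalso.
  set (m := Rmin (Rmin 1 (1/(2*alpha'))) (-x/2)).
  assert (Hm0 : 0 < m).
  { unfold m. apply Rmin_glb_lt; [apply Rmin_glb_lt|]; try lra.
    apply Rdiv_lt_0_compat; lra. }
  assert (Hm1 : m <= 1) by (unfold m; generalize (Rmin_l (Rmin 1 (1/(2*alpha'))) (-x/2)) (Rmin_l 1 (1/(2*alpha'))); lra).
  assert (Hm2 : m <= 1/(2*alpha')) by (unfold m; generalize (Rmin_l (Rmin 1 (1/(2*alpha'))) (-x/2)) (Rmin_r 1 (1/(2*alpha'))); lra).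
  assert (Hm3 : m <= -x/2) by (unfold m; apply Rmin_r).
  assert (HeK : m / K * K = m) by (field; lra).
  specialize (H (m / K) ltac:(apply Rdiv_lt_0_compat; lra)).
  rewrite HeK in H.
  assert (alpha' * m <= 1/2).
  { apply Rmult_le_compat_l with (r := alpha') in Hm2; [|lra].
    replace (alpha' * (1 / (2 * alpha'))) with (1/2) in Hm2 by (field; lra). lra. }
  specialize (H Hm1 H0).
  assert (m / K * k <= m).
  { replace (m / K * k) with (m * (k / K)) by (field; lra).
    assert (k / K <= 1) by (apply (Rmult_le_reg_r K); [lra|]; unfold Rdiv; rewrite Rmult_assoc, Rinv_l; lra).
    assert (0 <= k / K) by (apply Rle_mult_inv_pos; lra). nra. }
  lra.
Qed.

Lemma extend z : 0 <= z -> (forall u, -tau <= u <= z -> nonneg u) ->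
  exists eta, 0 < eta /\ forall t, z <= t <= z + eta -> nonneg t.
Proof.
  intros Hz Hnn.
  destruct (local_bound Te z (Te_cont z)) as [d1 [Hd1 B1]].
  destruct (local_bound Ie z (Ie_cont z)) as [d2 [Hd2 B2]].
  destruct (local_bound Ve z (Ve_cont z)) as [d3 [Hd3 B3]].
  set (eta := Rmin (Rmin d1 d2) d3 / 2).
  assert (Heta : 0 < eta) by (unfold eta; apply Rdiv_lt_0_compat; [apply Rmin_glb_lt; [apply Rmin_glb_lt|]|]; lra).
  assert (Heta' : eta < d1 /\ eta < d2 /\ eta < d3).
  { unfold eta. generalize (Rmin_l (Rmin d1 d2) d3) (Rmin_r (Rmin d1 d2) d3) (Rmin_l d1 d2) (Rmin_r d1 d2). lra. }
  set (M := 1 + Rabs (T z) + Rabs (I z) + Rabs (V z)).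
  assert (HM : 1 <= M) by (unfold M; generalize (Rabs_pos (T z)) (Rabs_pos (I z)) (Rabs_pos (V z)); lra).
  assert (Hbd : forall t, z <= t <= z + eta -> Rabs (T t) <= M /\ Rabs (I t) <= M /\ Rabs (V t) <= M).
  { intros t Ht. assert (Htz : Rabs (t - z) <= eta) by (rewrite Rabs_right; lra).
    specialize (B1 t ltac:(lra)). specialize (B2 t ltac:(lra)). specialize (B3 t ltac:(lra)).
    unfold Te, Ie, Ve in *. rewrite !e_eq in * by lra.
    unfold M. generalize (Rabs_pos (T z)) (Rabs_pos (I z)) (Rabs_pos (V z)). lra. }
  exists eta. split; auto. intros t Ht.
  set (L := 1 + p + a + 2*a*M/Tmax + 2*b*M).
  assert (HL : 0 < L).
  { unfold L. assert (0 <= 2*a*M/Tmax) by (apply Rle_mult_inv_pos; nra). nra. }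
  assert (Hk : exp (L*(t-z)) <= exp (L*eta)) by (apply exp_le_exp; nra).
  assert (H := extend_eps z eta M).
  cbv zeta in H. fold L in H.
  assert (HK := exp_pos (L*eta)). assert (Hk0 := exp_pos (L*(t-z))).
  repeat split;
  apply (small_eps_nonneg _ (exp (L*eta)) (exp (L*(t-z))) alpha); auto;
  intros eps He H1 H2; apply (H eps Hz Heta HM Hnn Hbd He H1 H2 t Ht).
Qed.

Lemma closed_nonneg (f : R -> R) z del0 : continuous f z -> 0 < del0 ->
  (forall u, z - del0 < u < z -> 0 <= f u) -> 0 <= f z.
Proof.
  intros Hc Hd H. destruct (Rle_or_lt 0 (f z)) as [|Hn]; auto. exfalso.
  destruct (cont_ed f z Hc (- f z / 2)) as [del [Hdel Hy]]. lra.
  set (u := z - Rmin del del0 / 2).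
  assert (0 < Rmin del del0) by (apply Rmin_glb_lt; lra).
  assert (Hu : Rabs (u - z) < del).
  { unfold u. rewrite Rabs_left by lra. generalize (Rmin_l del del0). lra. }
  specialize (Hy u Hu). apply Rabs_def2 in Hy.
  assert (0 <= f u) by (apply H; unfold u; generalize (Rmin_r del del0); lra). lra.
Qed.

Lemma nonneg_init t : -tau <= t <= 0 -> nonneg t.
Proof. intros H. destruct Hsol as [_ [_ [_ [Hi _]]]]. apply Hi; auto. Qed.

Lemma nonneg_all : forall t, -tau <= t -> nonneg t.
Proof.
  apply Classical_Prop.NNPP. intros Hn.
  apply Classical_Pred_Type.not_all_ex_not in Hn. destruct Hn as [t1 Ht1].
  apply Classical_Prop.imply_to_and in Ht1. destruct Ht1 as [Ht1a Ht1b].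
  assert (Ht1 : 0 < t1).
  { destruct (Rle_or_lt t1 0); auto. exfalso. apply Ht1b. apply nonneg_init. lra. }
  set (E := fun x => 0 <= x /\ forall u, -tau <= u <= x -> nonneg u).
  assert (HB : bound E).
  { exists t1. intros x [Hx1 Hx2]. destruct (Rle_or_lt x t1); auto.
    exfalso. apply Ht1b. apply Hx2. lra. }
  assert (HE : exists x, E x).
  { exists 0. split. lra. intros u Hu. apply nonneg_init. lra. }
  destruct (completeness E HB HE) as [z [Hub Hlub]].
  assert (Hz0 : 0 <= z) by (apply Hub; destruct HE as [x Hx]; split; [lra| intros u Hu; apply nonneg_init; lra]).
  assert (Hbelow : forall u, -tau <= u < z -> nonneg u).
  { intros u Hu.
    assert (~ (forall x, E x -> x <= u)) as Hn.
    { intro Hc'. specialize (Hlub u Hc'). lra. }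
    apply Classical_Pred_Type.not_all_ex_not in Hn. destruct Hn as [x Hx].
    apply Classical_Prop.imply_to_and in Hx. destruct Hx as [[Hx1 Hx2] Hx3].
    apply Hx2. lra. }
  assert (Hat : nonneg z).
  { destruct (Rle_or_lt z 0) as [Hz|Hz].
    - apply nonneg_init. lra.
    - unfold nonneg.
      assert (Hb' : forall u, z - z < u < z -> nonneg u) by (intros u Hu; apply Hbelow; lra).
      repeat split.
      + rewrite <- (e_eq T z) by lra. apply (closed_nonneg Te z z (Te_cont z) Hz).
        intros u Hu. unfold Te. rewrite e_eq by lra. apply Hb'; auto.
      + rewrite <- (e_eq I z) by lra. apply (closed_nonneg Ie z z (Ie_cont z) Hz).
        intros u Hu. unfold Ie. rewrite e_eq by lra. apply Hb'; auto.
      + rewrite <- (e_eq V z) by lra. apply (closed_nonneg Ve z z (Ve_cont z) Hz).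
        intros u Hu. unfold Ve. rewrite e_eq by lra. apply Hb'; auto. }
  assert (Hall : forall u, -tau <= u <= z -> nonneg u).
  { intros u Hu. destruct (Rle_or_lt z u). replace u with z by lra. auto. apply Hbelow; lra. }
  destruct (extend z Hz0 Hall) as [eta [Heta Hext]].
  assert (E (z + eta)).
  { split. lra. intros u Hu. destruct (Rle_or_lt u z). apply Hall; lra. apply Hext; lra. }
  specialize (Hub _ H). lra.
Qed.

Lemma T_pos t : 0 < t -> 0 < T t.
Proof.
  intros Ht. destruct (nonneg_all t ltac:(lra)) as [HT [HI HV]].
  destruct HT as [|HT0]; auto. exfalso.
  destruct (derivs t Ht) as [DT _].
  assert (Hd : 0 < dT t) by (unfold dT; rewrite <- HT0; unfold Rdiv; ring_simplify; lra).
  destruct (deriv_left T t _ DT Hd t Ht) as [u [Hu1 Hu2]].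
  destruct (nonneg_all u ltac:(lra)) as [Hu _]. lra.
Qed.

Lemma Te_nonneg u : 0 <= Te u.
Proof. unfold Te. apply nonneg_all. apply Rmax_r. Qed.
Lemma Ie_nonneg u : 0 <= Ie u.
Proof. unfold Ie. apply nonneg_all. apply Rmax_r. Qed.
Lemma Ve_nonneg u : 0 <= Ve u.
Proof. unfold Ve. apply nonneg_all. apply Rmax_r. Qed.

Definition Bt u := b * Te u * Ve u / (1 + alpha * Ve u).

Lemma Bt_cont x : continuous Bt x.
Proof.
  unfold Bt.
  assert (H0 : 0 < 1 + alpha * Ve x) by (generalize (Ve_nonneg x); nra).
  apply (continuous_mult (fun y => b * Te y * Ve y) (fun y => / (1 + alpha * Ve y))).
  - apply (continuous_mult (fun y => b * Te y) Ve).
    apply (continuous_mult (fun _ => b) Te). apply continuous_const. apply Te_cont. apply Ve_cont.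
  - apply continuous_Rinv_comp; [|lra].
    apply (continuous_plus (fun _ => 1) (fun y => alpha * Ve y)). apply continuous_const.
    apply (continuous_mult (fun _ => alpha) Ve). apply continuous_const. apply Ve_cont.
Qed.

Lemma Bt_nonneg u : 0 <= Bt u.
Proof.
  unfold Bt. generalize (Te_nonneg u) (Ve_nonneg u); intros.
  unfold Rdiv. apply Rmult_le_pos. apply Rmult_le_pos; [apply Rmult_le_pos|]; lra.
  left. apply Rinv_0_lt_compat. nra.
Qed.

Lemma Bt_eq u : -tau <= u -> Bt u = b * T u * V u / (1 + alpha * V u).
Proof. intros H. unfold Bt, Te, Ve. rewrite !e_eq; auto. Qed.

Lemma Bt_ex x y : ex_RInt Bt x y.
Proof. apply (@ex_RInt_continuous R_CompleteNormedModule). intros; apply Bt_cont. Qed.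

Definition F t := RInt Bt 0 t.
Lemma F_deriv t : is_derive F t (Bt t).
Proof.
  apply (is_derive_RInt Bt F 0 t). 2: apply Bt_cont.
  exists (mkposreal 1 Rlt_0_1). intros y _. unfold F. apply (@RInt_correct R_CompleteNormedModule). apply Bt_ex.
Qed.

Definition J t := F t - F (t - tau).
Lemma J_deriv t : is_derive J t (Bt t - Bt (t - tau)).
Proof.
  unfold J. apply (is_derive_minus F (fun t => F (t - tau))). apply F_deriv.
  assert (H : is_derive (fun t => t - tau) t 1) by (auto_derive; auto; ring).
  generalize (is_derive_comp F (fun t => t - tau) t _ _ (F_deriv (t - tau)) H).
  intros H'. replace (Bt (t - tau)) with (scal 1 (Bt (t - tau))). exact H'.
  unfold scal; simpl; unfold mult; simpl; ring.
Qed.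

Lemma J_eq t : J t = RInt Bt (t - tau) t.
Proof.
  unfold J, F. rewrite <- (RInt_Chasles Bt (t - tau) 0 t) by apply Bt_ex.
  rewrite <- (opp_RInt_swap Bt 0 (t - tau)) by apply Bt_ex.
  change (RInt Bt 0 t - RInt Bt 0 (t - tau) = - RInt Bt 0 (t - tau) + RInt Bt 0 t). ring.
Qed.

Lemma J_nonneg t : 0 <= J t.
Proof.
  rewrite J_eq. apply RInt_ge_0. lra. apply Bt_ex. intros; apply Bt_nonneg.
Qed.

Hypothesis HR0 : R0_number s d a Tmax b mu p c <= 1.

Definition Tz := T0 s d a Tmax.
Definition kk := b * Tz / c.

Lemma Tz_pos : 0 < Tz.
Proof. apply T0_facts; auto. Qed.
Lemma Tz_eq : s - d * Tz + a * Tz * (1 - Tz / Tmax) = 0.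
Proof. apply T0_facts; auto. Qed.
Lemma R0_cond : b * p * Tz / c + a * (1 - Tz / Tmax) <= mu.
Proof.
  unfold R0_number in HR0. fold Tz in HR0.
  apply (Rmult_le_compat_l mu) in HR0; [|lra].
  rewrite <- Rmult_assoc, Rinv_r, Rmult_1_l, Rmult_1_r in HR0 by lra.
  replace (b * p * Tz / c) with (b * p * Tz / c) by ring. lra.
Qed.

Definition U t := T t - Tz - Tz * ln (T t / Tz) + I t + kk * V t + J t.
Definition dU t := dT t - Tz * (dT t / T t) + dI t + kk * dV t + (Bt t - Bt (t - tau)).

Lemma U_deriv t : 0 < t -> is_derive U t (dU t).
Proof.
  intros Ht. destruct (derivs t Ht) as [DT [DI DV]].
  assert (HT := T_pos t Ht). assert (Hz := Tz_pos).
  assert (DL : is_derive (fun t => ln (T t / Tz)) t (dT t / T t)).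
  { assert (H1 : is_derive (fun t => T t / Tz) t (dT t / Tz)).
    { apply (is_derive_ext (fun t => / Tz * T t)). intros u; unfold Rdiv; apply Rmult_comm.
      replace (dT t / Tz) with (/ Tz * dT t) by (unfold Rdiv; ring). apply is_derive_scal. auto. }
    generalize (is_derive_comp ln (fun t => T t / Tz) t _ _ (is_derive_ln (T t / Tz) ltac:(apply Rdiv_lt_0_compat; lra)) H1).
    intros H. replace (dT t / T t) with (scal (dT t / Tz) (/ (T t / Tz))). exact H.
    unfold scal; simpl; unfold mult; simpl. field. lra. }
  unfold U, dU.
  apply (is_derive_plus (fun t => T t - Tz - Tz * ln (T t / Tz) + I t + kk * V t) J).
  2: apply J_deriv.
  apply (is_derive_plus (fun t => T t - Tz - Tz * ln (T t / Tz) + I t) (fun t => kk * V t)).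
  2: apply is_derive_scal; auto.
  apply (is_derive_plus (fun t => T t - Tz - Tz * ln (T t / Tz)) I). 2: auto.
  replace (dT t - Tz * (dT t / T t)) with (minus (minus (dT t) 0) (Tz * (dT t / T t))).
  2: (unfold minus, plus, opp; simpl; ring).
  apply (is_derive_minus (fun t => T t - Tz) (fun t => Tz * ln (T t / Tz))).
  apply (is_derive_minus T (fun _ => Tz)). auto. apply (@is_derive_const R_AbsRing R_NormedModule Tz t).
  apply is_derive_scal. auto.
Qed.

Lemma dU_le t : 0 < t -> dU t <= - (s / (T t * Tz)) * (T t - Tz)^2 - a / Tmax * (T t + I t - Tz)^2
     - b * Tz * alpha * V t^2 / (1 + alpha * V t).
Proof.
  intros Ht. assert (HT := T_pos t Ht).
  destruct (nonneg_all t ltac:(lra)) as [_ [HI HV]].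
  destruct (nonneg_all (t - tau) ltac:(lra)) as [_ [_ HVd]].
  unfold dU, dT, dI, dV, kk. rewrite !Bt_eq by lra.
  apply (lyap_alg s d a Tmax b alpha mu p c Tz (T t) (I t) (V t) (T (t - tau)) (V (t-tau)));
    auto; try apply Tz_pos; try apply Tz_eq; apply R0_cond.
Qed.

Lemma U_mono x y : 0 < x -> x <= y -> U y <= U x.
Proof.
  intros Hx [Hxy|Hxy]; [|subst; lra].
  destruct (mvt U dU x y Hxy) as [c0 [Hc Heq]]. intros t Ht; apply U_deriv; lra.
  assert (dU c0 <= 0).
  { apply Rle_trans with (1 := dU_le c0 ltac:(lra)).
    assert (HT := T_pos c0 ltac:(lra)). assert (Hz := Tz_pos).
    destruct (nonneg_all c0 ltac:(lra)) as [_ [_ HV]].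
    assert (0 <= s / (T c0 * Tz) * (T c0 - Tz)^2).
    { apply Rmult_le_pos. apply Rdiv_le_0_compat; nra. apply pow2_ge_0. }
    assert (0 <= a / Tmax * (T c0 + I c0 - Tz)^2).
    { apply Rmult_le_pos. apply Rdiv_le_0_compat; nra. apply pow2_ge_0. }
    assert (0 <= b * Tz * alpha * V c0^2 / (1 + alpha * V c0)).
    { apply Rdiv_le_0_compat. apply Rmult_le_pos. apply Rmult_le_pos; [apply Rmult_le_pos|]; lra. apply pow2_ge_0.
      assert (0 <= alpha * V c0) by (apply Rmult_le_pos; lra). lra. }
    lra. }
  nra.
Qed.

Lemma kk_pos : 0 < kk.
Proof. unfold kk. assert (Hz := Tz_pos). apply Rdiv_lt_0_compat; nra. Qed.

Lemma U_lower t : 0 < t ->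
  0 <= T t - Tz - Tz * ln (T t / Tz) /\ T t / 2 - Tz <= T t - Tz - Tz * ln (T t / Tz) /\
  T t - Tz - Tz * ln (T t / Tz) + I t + kk * V t <= U t.
Proof.
  intros Ht. assert (HT := T_pos t Ht). assert (Hz := Tz_pos).
  split. apply g_nonneg; auto. split. apply g_lower; auto.
  unfold U. generalize (J_nonneg t). lra.
Qed.

Lemma bounds : exists M, 0 < M /\ forall t, 1 <= t -> 0 <= T t <= M /\ 0 <= I t <= M /\ 0 <= V t <= M.
Proof.
  assert (Hk := kk_pos).
  destruct (U_lower 1 ltac:(lra)) as [G1 [_ G3]].
  destruct (nonneg_all 1 ltac:(lra)) as [_ [HI1 HV1]].
  assert (HU1 : 0 <= U 1) by (assert (0 <= kk * V 1) by nra; lra).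
  exists (2*(U 1 + Tz) + U 1 + U 1 / kk + 1).
  assert (0 <= U 1 / kk) by (apply Rdiv_le_0_compat; lra).
  assert (Hz := Tz_pos).
  split. lra.
  intros t Ht. destruct (U_lower t ltac:(lra)) as [H1 [H2 H3]].
  assert (Hm := U_mono 1 t ltac:(lra) Ht).
  destruct (nonneg_all t ltac:(lra)) as [HT [HI HV]].
  assert (0 <= kk * V t) by nra.
  assert (V t <= U 1 / kk).
  { apply (Rmult_le_reg_l kk); auto. unfold Rdiv. rewrite <- Rmult_assoc, (Rmult_comm kk (U 1)), Rmult_assoc, Rinv_r, Rmult_1_r; lra. }
  repeat split; lra.
Qed.

Definition KT M := s + d*M + a*M + 2*a*M*M/Tmax + b*M*M.
Definition KI M := b*M*M + a*M + 2*a*M*M/Tmax + mu*M.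
Definition KV M := p*M + c*M.

Lemma dbounds M t : 0 < M -> 0 < t -> 0 <= T t <= M -> 0 <= I t <= M -> 0 <= V t <= M ->
  0 <= T (t - tau) <= M -> 0 <= V (t - tau) <= M ->
  Rabs (dT t) <= KT M /\ Rabs (dI t) <= KI M /\ Rabs (dV t) <= KV M.
Proof.
  intros HM Ht HT HI HV HTd HVd.
  destruct (logi_bounds a Tmax (T t) (I t) M ha hTm HT HI) as [L1 L2].
  destruct (logi_bounds a Tmax (I t) (T t) M ha hTm HI HT) as [L3 L4].
  replace (T t + I t) with (I t + T t) in L1, L2 by ring.
  destruct (frac_bounds b alpha (T t) (V t) M hb hal HT HV) as [F1 F2].
  destruct (frac_bounds b alpha (T (t - tau)) (V (t - tau)) M hb hal HTd HVd) as [F3 F4].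
  assert (0 <= d * T t <= d * M) by (split; [apply Rmult_le_pos|apply Rmult_le_compat_l]; lra).
  assert (0 <= a * T t <= a * M) by (split; [apply Rmult_le_pos|apply Rmult_le_compat_l]; lra).
  assert (0 <= a * I t <= a * M) by (split; [apply Rmult_le_pos|apply Rmult_le_compat_l]; lra).
  assert (0 <= mu * I t <= mu * M) by (split; [apply Rmult_le_pos|apply Rmult_le_compat_l]; lra).
  assert (0 <= p * I t <= p * M) by (split; [apply Rmult_le_pos|apply Rmult_le_compat_l]; lra).
  assert (0 <= c * V t <= c * M) by (split; [apply Rmult_le_pos|apply Rmult_le_compat_l]; lra).
  assert (0 <= 2*a*M*M/Tmax) by (apply Rdiv_le_0_compat; nra).
  assert (0 <= b*M*M) by nra.
  unfold dT, dI, dV, KT, KI, KV.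
  replace (I t + T t) with (T t + I t) in L3, L4 by ring.
  repeat split; apply Rabs_le; lra.
Qed.

Lemma deriv_sub_const (f : R -> R) t df k : is_derive f t df -> is_derive (fun x => f x - k) t df.
Proof.
  intros H. replace df with (minus df (@zero R_NormedModule)).
  apply (is_derive_minus f (fun _ => k)); auto. apply (@is_derive_const R_AbsRing R_NormedModule k t).
  unfold minus, plus, opp, zero; simpl; ring.
Qed.

Lemma lim_of (f : R -> R) l : (forall eps, 0 < eps -> exists N, forall t, N < t -> Rabs (f t - l) < eps) ->
  is_lim f p_infty l.
Proof.
  intros H. apply is_lim_spec. intros eps. destruct (H eps (cond_pos eps)) as [N HN].
  exists N. intros x Hx. apply HN; auto.
Qed.

Lemma attract : is_lim T p_infty Tz /\ is_lim I p_infty 0 /\ is_lim V p_infty 0.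
Proof.
  destruct bounds as [M [HM Hb]].
  set (t2 := 1 + tau).
  assert (Hz := Tz_pos). assert (Hk := kk_pos).
  assert (Hall : forall t, t2 < t -> 0 < T t /\ 0 <= T t <= M /\ 0 <= I t <= M /\ 0 <= V t <= M /\
     0 <= T (t - tau) <= M /\ 0 <= V (t - tau) <= M).
  { intros t Ht. unfold t2 in Ht.
    destruct (Hb t ltac:(lra)) as [A1 [A2 A3]]. destruct (Hb (t - tau) ltac:(lra)) as [B1 [B2 B3]].
    split. apply T_pos; lra. auto. }
  assert (HD : forall t, t2 < t -> Rabs (dT t) <= KT M /\ Rabs (dI t) <= KI M /\ Rabs (dV t) <= KV M).
  { intros t Ht. destruct (Hall t Ht) as [_ [A1 [A2 [A3 [A4 A5]]]]]. apply dbounds; auto.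
    unfold t2 in Ht; lra. }
  assert (HU : forall t, t2 < t -> 0 <= U t).
  { intros t Ht. destruct (U_lower t ltac:(unfold t2 in Ht; lra)) as [G1 [_ G3]].
    destruct (Hall t Ht) as [_ [_ [A2 [A3 _]]]]. assert (0 <= kk * V t) by nra. lra. }
  assert (DU : forall t, t2 < t -> is_derive U t (dU t)) by (intros; apply U_deriv; unfold t2 in *; lra).
  assert (Hterms : forall t, t2 < t ->
     0 <= s / (T t * Tz) * (T t - Tz)^2 /\ 0 <= a / Tmax * (T t + I t - Tz)^2 /\
     0 <= b * Tz * alpha * V t^2 / (1 + alpha * V t)).
  { intros t Ht. destruct (Hall t Ht) as [HT [_ [_ [A3 _]]]].
    split. apply Rmult_le_pos. apply Rdiv_le_0_compat; nra. apply pow2_ge_0.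
    split. apply Rmult_le_pos. apply Rdiv_le_0_compat; nra. apply pow2_ge_0.
    apply Rdiv_le_0_compat. apply Rmult_le_pos. apply Rmult_le_pos; [apply Rmult_le_pos|]; lra.
    apply pow2_ge_0. assert (0 <= alpha * V t) by (apply Rmult_le_pos; lra). lra. }
  assert (HKT : 0 < KT M).
  { unfold KT. assert (0 <= 2*a*M*M/Tmax) by (apply Rdiv_le_0_compat; nra).
    assert (0 <= d * M) by nra. assert (0 <= a * M) by nra. assert (0 <= b*M*M) by nra. lra. }
  assert (HKI : 0 < KI M).
  { unfold KI. assert (0 <= 2*a*M*M/Tmax) by (apply Rdiv_le_0_compat; nra).
    assert (0 <= mu * M) by nra. assert (0 < a * M) by nra. assert (0 <= b*M*M) by nra. lra. }
  assert (HKV : 0 < KV M) by (unfold KV; nra).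
  assert (B1 := barbalat U dU (fun t => T t - Tz) dT t2 (s / (M * Tz)) (KT M)
     ltac:(apply Rdiv_lt_0_compat; nra) HKT DU
     ltac:(intros t Ht; apply deriv_sub_const; apply derivs; unfold t2 in Ht; lra)).
  assert (B1' : forall eps, 0 < eps -> exists N, forall t, N < t -> Rabs (T t - Tz) < eps).
  { apply B1; [| intros t Ht; apply HD; auto | auto].
    intros t Ht. apply Rle_trans with (1 := dU_le t ltac:(unfold t2 in Ht; lra)).
    destruct (Hterms t Ht) as [_ [G2 G3]]. destruct (Hall t Ht) as [HT [[_ HTM] _]].
    assert (s / (M * Tz) * (T t - Tz)^2 <= s / (T t * Tz) * (T t - Tz)^2).
    { apply Rmult_le_compat_r. apply pow2_ge_0. unfold Rdiv. apply Rmult_le_compat_l. lra.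
      apply Rinv_le_contravar. nra. apply Rmult_le_compat_r; lra. }
    lra. }
  assert (B2 := barbalat U dU (fun t => T t + I t - Tz) (fun t => dT t + dI t) t2 (a / Tmax) (KT M + KI M)
     ltac:(apply Rdiv_lt_0_compat; nra) ltac:(lra) DU).
  assert (B2' : forall eps, 0 < eps -> exists N, forall t, N < t -> Rabs (T t + I t - Tz) < eps).
  { apply B2.
    - intros t Ht. apply deriv_sub_const. destruct (derivs t ltac:(unfold t2 in Ht; lra)) as [D1 [D2 _]].
      apply (is_derive_plus T I); auto.
    - intros t Ht. apply Rle_trans with (1 := dU_le t ltac:(unfold t2 in Ht; lra)).
      destruct (Hterms t Ht) as [G1 [G2 G3]]. lra.
    - intros t Ht. destruct (HD t Ht) as [E1 [E2 _]].
      apply Rle_trans with (1 := Rabs_triang _ _). lra.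
    - auto. }
  assert (B3 := barbalat U dU V dV t2 (b * Tz * alpha / (1 + alpha * M)) (KV M)
     ltac:(apply Rdiv_lt_0_compat; [apply Rmult_lt_0_compat; [apply Rmult_lt_0_compat|]|]; nra) HKV DU).
  assert (B3' : forall eps, 0 < eps -> exists N, forall t, N < t -> Rabs (V t) < eps).
  { apply B3.
    - intros t Ht. apply derivs. unfold t2 in Ht; lra.
    - intros t Ht. apply Rle_trans with (1 := dU_le t ltac:(unfold t2 in Ht; lra)).
      destruct (Hterms t Ht) as [G1 [G2 G3]]. destruct (Hall t Ht) as [_ [_ [_ [[HV1 HV2] _]]]].
      assert (b * Tz * alpha / (1 + alpha * M) * V t ^ 2 <= b * Tz * alpha * V t ^ 2 / (1 + alpha * V t)).
      { unfold Rdiv. rewrite Rmult_assoc, (Rmult_comm (/ (1 + alpha * M))), <- Rmult_assoc.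
        apply Rmult_le_compat_l. apply Rmult_le_pos. apply Rmult_le_pos; [apply Rmult_le_pos|]; lra.
        apply pow2_ge_0.
        apply Rinv_le_contravar. assert (0 <= alpha * V t) by (apply Rmult_le_pos; lra). lra.
        apply Rplus_le_compat_l. apply Rmult_le_compat_l; lra. }
      lra.
    - intros t Ht. apply HD; auto.
    - auto. }
  split; [|split].
  - apply lim_of. exact B1'.
  - apply lim_of. intros eps He.
    destruct (B1' (eps/2) ltac:(lra)) as [N1 H1]. destruct (B2' (eps/2) ltac:(lra)) as [N2 H2].
    exists (Rmax N1 N2). intros t Ht.
    specialize (H1 t ltac:(generalize (Rmax_l N1 N2); lra)). specialize (H2 t ltac:(generalize (Rmax_r N1 N2); lra)).
    replace (I t - 0) with ((T t + I t - Tz) - (T t - Tz)) by ring.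
    apply Rle_lt_trans with (1 := Rabs_triang _ _). rewrite Rabs_Ropp. lra.
  - apply lim_of. intros eps He. destruct (B3' eps He) as [N HN]. exists N. intros t Ht.
    rewrite Rminus_0_r. auto.
Qed.

Lemma dU_nonpos t : 0 <= t -> 0 < T t -> dU t <= 0.
Proof.
  intros Ht HT. assert (Hz := Tz_pos).
  destruct (nonneg_all t ltac:(lra)) as [_ [HI HV]].
  destruct (nonneg_all (t - tau) ltac:(lra)) as [_ [_ HVd]].
  assert (H : dU t <= - (s / (T t * Tz)) * (T t - Tz)^2 - a / Tmax * (T t + I t - Tz)^2
     - b * Tz * alpha * V t^2 / (1 + alpha * V t)).
  { unfold dU, dT, dI, dV, kk. rewrite !Bt_eq by lra.
    apply (lyap_alg s d a Tmax b alpha mu p c Tz (T t) (I t) (V t) (T (t - tau)) (V (t-tau)));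
      auto; try apply Tz_pos; try apply Tz_eq; apply R0_cond. }
  assert (0 <= s / (T t * Tz) * (T t - Tz)^2).
  { apply Rmult_le_pos. apply Rdiv_le_0_compat; nra. apply pow2_ge_0. }
  assert (0 <= a / Tmax * (T t + I t - Tz)^2).
  { apply Rmult_le_pos. apply Rdiv_le_0_compat; nra. apply pow2_ge_0. }
  assert (0 <= b * Tz * alpha * V t^2 / (1 + alpha * V t)).
  { apply Rdiv_le_0_compat. apply Rmult_le_pos. apply Rmult_le_pos; [apply Rmult_le_pos|]; lra. apply pow2_ge_0.
    assert (0 <= alpha * V t) by (apply Rmult_le_pos; lra). lra. }
  lra.
Qed.

Definition Ue t := Te t - Tz - Tz * ln (Te t / Tz) + Ie t + kk * Ve t + J t.

Lemma Ue_eq t : -tau <= t -> Ue t = U t.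
Proof. intros H. unfold Ue, U, Te, Ie, Ve. rewrite !e_eq; auto. Qed.

Lemma J_cont t : continuous J t.
Proof. apply (ex_derive_continuous J). eexists. apply J_deriv. Qed.

Lemma Ue_cont t : 0 < Te t -> continuous Ue t.
Proof.
  intros HT. assert (Hz := Tz_pos). unfold Ue.
  apply (continuous_plus (fun t => Te t - Tz - Tz * ln (Te t / Tz) + Ie t + kk * Ve t) J); [|apply J_cont].
  apply (continuous_plus (fun t => Te t - Tz - Tz * ln (Te t / Tz) + Ie t) (fun t => kk * Ve t)).
  2: apply (continuous_mult (fun _ => kk) Ve); [apply continuous_const|apply Ve_cont].
  apply (continuous_plus (fun t => Te t - Tz - Tz * ln (Te t / Tz)) Ie); [|apply Ie_cont].
  apply (continuous_minus (fun t => Te t - Tz) (fun t => Tz * ln (Te t / Tz))).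
  apply (continuous_minus Te (fun _ => Tz)); [apply Te_cont|apply continuous_const].
  apply (continuous_mult (fun _ => Tz) (fun t => ln (Te t / Tz))). apply continuous_const.
  apply (continuous_comp (fun t => Te t / Tz) ln).
  apply (continuous_mult Te (fun _ => / Tz)); [apply Te_cont|apply continuous_const].
  apply (ex_derive_continuous ln). eexists. apply is_derive_ln. apply Rdiv_lt_0_compat; lra.
Qed.

Lemma U_le_U0 t : 0 < T 0 -> 0 <= t -> U t <= U 0.
Proof.
  intros H0 [Ht|Ht]; [|subst; lra].
  rewrite <- !Ue_eq by lra.
  destruct (mvt_cont Ue dU 0 t Ht) as [c0 [Hc Heq]].
  - intros x Hx. apply (is_derive_ext_loc U). 2: apply U_deriv; lra.
    exists (mkposreal x ltac:(lra)). intros y Hy. change (Rabs (y - x) < x) in Hy.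
    apply Rabs_def2 in Hy. rewrite Ue_eq; auto; lra.
  - intros x Hx. apply Ue_cont. unfold Te. rewrite e_eq by lra.
    destruct Hx as [[Hx|Hx] _]. apply T_pos; auto. subst; auto.
  - assert (dU c0 <= 0).
    { apply dU_nonpos. lra. destruct Hc as [[Hc|Hc] _]. apply T_pos; auto. subst; auto. }
    nra.
Qed.

Lemma U_lower' t : 0 <= t -> 0 < T t ->
  gfun Tz (T t) + I t + kk * V t <= U t.
Proof.
  intros Ht HT. unfold U, gfun. generalize (J_nonneg t). lra.
Qed.

Lemma J0_bound del : 0 < del -> init_close tau del Tz 0 0 T I V -> J 0 <= tau * (b * (Tz + del) * del).
Proof.
  intros Hd Hic. rewrite J_eq. replace (0 - tau) with (-tau) by ring.
  assert (Hz := Tz_pos).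
  apply Rle_trans with (RInt (fun _ => b * (Tz + del) * del) (-tau) 0).
  - apply RInt_le. lra. apply Bt_ex. apply ex_RInt_const.
    intros x Hx. rewrite Bt_eq by lra.
    destruct (Hic x ltac:(lra)) as [H1 [_ H3]].
    destruct (nonneg_init x ltac:(lra)) as [N1 [_ N3]].
    apply Rabs_def2 in H1. apply Rabs_def2 in H3.
    assert (Hv : 1 <= 1 + alpha * V x) by nra.
    assert (0 <= b * T x * V x) by (apply Rmult_le_pos; [apply Rmult_le_pos|]; lra).
    apply Rle_trans with (b * T x * V x).
    + unfold Rdiv. rewrite <- (Rmult_1_r (b * T x * V x)) at 2. apply Rmult_le_compat_l; auto.
      rewrite <- Rinv_1. apply Rinv_le_contravar; lra.
    + rewrite !Rmult_assoc. apply Rmult_le_compat_l. lra.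
      apply Rmult_le_compat; lra.
  - rewrite RInt_const. unfold scal; simpl; unfold mult; simpl. lra.
Qed.

Lemma stab_sol del : 0 < del -> del <= 1 -> del <= Tz / 2 -> init_close tau del Tz 0 0 T I V ->
  forall t, 0 <= t -> gfun Tz (T t) + I t + kk * V t <= del * (2 + kk + tau * b * (Tz + 1))
    /\ 0 < T t /\ 0 <= I t /\ 0 <= V t.
Proof.
  intros Hd Hd1 Hd2 Hic t Ht. assert (Hz := Tz_pos). assert (Hk := kk_pos).
  destruct (Hic 0 ltac:(lra)) as [H1 [H2 H3]].
  rewrite Rminus_0_r in H2, H3.
  assert (HT0 : 0 < T 0) by (apply Rabs_def2 in H1; lra).
  assert (HTt : 0 < T t) by (destruct Ht as [Ht|Ht]; [apply T_pos; auto| subst; auto]).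
  destruct (nonneg_all t ltac:(lra)) as [_ [HI HV]].
  split; [|auto].
  apply Rle_trans with (U t). apply U_lower'; auto.
  apply Rle_trans with (U 0). apply U_le_U0; auto.
  destruct (nonneg_init 0 ltac:(lra)) as [_ [N2 N3]].
  rewrite Rabs_right in H2, H3 by lra.
  assert (HJ := J0_bound del Hd Hic).
  assert (Hg := g_upper Tz (T 0) Hz HT0).
  assert (Hsq : (T 0 - Tz)^2 <= del^2).
  { rewrite <- (Rsqr_pow2 (T 0 - Tz)), Rsqr_abs, Rsqr_pow2. apply pow_incr. split. apply Rabs_pos. lra. }
  assert (HT0' : Tz / 2 <= T 0) by (apply Rabs_def2 in H1; lra).
  assert (Hq : (T 0 - Tz)^2 / T 0 <= del).
  { apply Rle_trans with (del^2 / (Tz/2)).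
    - unfold Rdiv. apply Rmult_le_compat. apply pow2_ge_0. left; apply Rinv_0_lt_compat; lra. auto.
      apply Rinv_le_contravar; lra.
    - apply (Rmult_le_reg_r (Tz/2)). lra. unfold Rdiv. rewrite Rmult_assoc, Rinv_l by lra. nra. }
  assert (U 0 = gfun Tz (T 0) + I 0 + kk * V 0 + J 0) by (unfold U, gfun; ring).
  assert (kk * V 0 <= kk * del) by (apply Rmult_le_compat_l; lra).
  assert (tau * (b * (Tz + del) * del) <= del * (tau * b * (Tz + 1))).
  { replace (tau * (b * (Tz + del) * del)) with (del * (tau * b * (Tz + del))) by ring.
    apply Rmult_le_compat_l. lra. apply Rmult_le_compat_l. apply Rmult_le_pos; lra. lra. }
  nra.
Qed.

End Model.

Theorem theorem3 (s d a Tmax b alpha mu p c tau : R) :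
  0 < s -> 0 < d -> 0 < a -> 0 < Tmax -> 0 < b -> 0 < alpha -> 0 < mu ->
  0 < p -> 0 < c -> 0 <= tau ->
  R0_number s d a Tmax b mu p c <= 1 ->
  globally_asymptotically_stable s d a Tmax b alpha mu p c tau
    (T0 s d a Tmax) 0 0.
Proof.
  intros hs hd ha hTm hb hal hmu hp hc htau HR0.
  split.
  - intros eps Heps.
    destruct (T0_facts s d a Tmax hs ha hTm) as [HZ _].
    set (Z := T0 s d a Tmax) in *.
    set (k := b * Z / c).
    assert (Hk : 0 < k) by (unfold k; apply Rdiv_lt_0_compat; nra).
    set (e' := Rmin eps (Z/2)).
    assert (He' : 0 < e' < Z).
    { unfold e'. split. apply Rmin_glb_lt; lra. generalize (Rmin_r eps (Z/2)); lra. }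
    assert (He'e : e' <= eps) by apply Rmin_l.
    destruct (g_pos Z e' HZ He') as [G1 G2].
    set (m := Rmin (Rmin (gfun Z (Z+e')) (gfun Z (Z-e'))) (Rmin eps (k*eps))).
    assert (Hm : 0 < m).
    { unfold m. apply Rmin_glb_lt; apply Rmin_glb_lt; try lra. nra. }
    assert (Hm1 : m <= Rmin (gfun Z (Z+e')) (gfun Z (Z-e'))) by apply Rmin_l.
    assert (Hm2 : m <= eps) by (unfold m; generalize (Rmin_r (Rmin (gfun Z (Z+e')) (gfun Z (Z-e'))) (Rmin eps (k*eps))) (Rmin_l eps (k*eps)); lra).
    assert (Hm3 : m <= k * eps) by (unfold m; generalize (Rmin_r (Rmin (gfun Z (Z+e')) (gfun Z (Z-e'))) (Rmin eps (k*eps))) (Rmin_r eps (k*eps)); lra).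
    set (C := 2 + k + tau * b * (Z + 1)).
    assert (HC : 0 < C) by (unfold C; assert (0 <= tau * b * (Z+1)) by (apply Rmult_le_pos; nra); lra).
    exists (Rmin (Rmin 1 (Z/2)) (m / (2*C))).
    assert (Hm2C : 0 < m / (2*C)) by (apply Rdiv_lt_0_compat; lra).
    split. apply Rmin_glb_lt; [apply Rmin_glb_lt|]; lra.
    intros T I V Hsol Hic t Ht.
    set (del := Rmin (Rmin 1 (Z/2)) (m / (2*C))) in *.
    assert (Hd1 : del <= 1) by (unfold del; generalize (Rmin_l (Rmin 1 (Z/2)) (m/(2*C))) (Rmin_l 1 (Z/2)); lra).
    assert (Hd2 : del <= Z/2) by (unfold del; generalize (Rmin_l (Rmin 1 (Z/2)) (m/(2*C))) (Rmin_r 1 (Z/2)); lra).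
    assert (Hd3 : del <= m/(2*C)) by (unfold del; apply Rmin_r).
    assert (Hd0 : 0 < del) by (unfold del; apply Rmin_glb_lt; [apply Rmin_glb_lt|]; lra).
    destruct (stab_sol s d a Tmax b alpha mu p c tau hs hd ha hTm hb hal hmu hp hc htau T I V Hsol HR0
                del Hd0 Hd1 Hd2 Hic t Ht) as [Hb' [HT [HI HV]]].
    unfold kk, Tz in Hb'. fold Z in Hb'. fold k in Hb'. fold C in Hb'.
    assert (HdC : del * C <= m / 2).
    { apply Rle_trans with (m / (2*C) * C). apply Rmult_le_compat_r; lra. right. field. lra. }
    assert (Hg0 := g_nonneg Z (T t) HZ HT). fold (gfun Z (T t)) in Hg0.
    assert (0 <= k * V t) by nra.
    split; [|split].
    + assert (Rabs (T t - Z) < e') by (apply (g_small Z e' (T t) HZ He' HT); lra). lra.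
    + rewrite Rminus_0_r, Rabs_right by lra. lra.
    + rewrite Rminus_0_r, Rabs_right by lra.
      assert (k * V t < k * eps) by lra.
      apply (Rmult_lt_reg_l k); auto.
  - intros T I V Hsol.
    apply (attract s d a Tmax b alpha mu p c tau hs hd ha hTm hb hal hmu hp hc htau T I V Hsol HR0).
Qed.
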